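(* Let $d\ge 2$, let $\bm{k}_1,\ldots,\bm{k}_d\in\mathbb{R}^d$ be a basis of $\mathbb{R}^d$ with $\mathsf{K}=[\bm{k}_1,\ldots,\bm{k}_d]$, let $\mathsf{A}=[\bm{a}_1,\ldots,\bm{a}_d]=2\pi\mathsf{K}^{-T}$, and let $\mathfrak{a},\mathfrak{b}\in\mathbb{R}$. For $\bm{u}=[\alpha_1,\ldots,\alpha_d,\beta_1,\ldots,\beta_d]^T\in\mathbb{C}^{2d}$ and $\bm{x}\in\mathbb{R}^d$ let $p(\bm{x};\bm{u})=\sum_{j=1}^d\alpha_j e^{i\bm{k}_j\cdot\bm{x}}+\beta_j e^{-i\bm{k}_j\cdot\bm{x}}$, $\psi(\bm{x};\bm{u})=\mathfrak{a}|p(\bm{x};\bm{u})|^2-\mathfrak{b}|\nabla_{\bm{x}}p(\bm{x};\bm{u})|^2$, and let $\mathsf{Q}(\bm{0})$ be the Hermitian matrix with $\psi(\bm{0};\bm{u})=\bm{u}^*\mathsf{Q}(\bm{0})\bm{u}$. Let $\bm{u}=[\bm{v};\pm\bm{v}]$ (with $\bm{v}\in\mathbb{R}^d$ and a fixed choice of sign) be a real unit-norm eigenvector of $\mathsf{Q}(\bm{0})$ with eigenvalue $\lambda$, and let $Z=\{j: v_j=0\}$. If $Z\neq\emptyset$, then $$\{\bm{k}_j: j\notin Z\}^\perp=\operatorname{span}\{\bm{a}_j: j\in Z\}\subset L_{\lambda,\bm{u}},$$ where $L_{\lambda,\bm{u}}=\{\bm{x}\in\mathbb{R}^d:\psi(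\bm{x};\bm{u})=\lambda\}$.
   Context: $[\bm{v};\pm\bm{v}]$ denotes the vector of $\mathbb{R}^{2d}$ obtained by stacking $\bm{v}$ on top of $\pm\bm{v}$. $S^\perp$ denotes the orthogonal complement in $\mathbb{R}^d$ of the set $S$. *)

(* Defs.v *)
From HB Require Import structures.
From mathcomp Require Import all_boot all_order all_algebra.
From mathcomp Require Import all_classical all_reals.
From mathcomp Require Import topology normedtype derive trigo.
From mathcomp Require complex.
Import complex.
Set Implicit Arguments. Unset Strict Implicit. Unset Printing Implicit Defensive.
Import Order.TTheory GRing.Theory Num.Theory.
Import numFieldNormedType.Exports.
Local Open Scope ring_scope.
Local Open Scope classical_set_scope.

Section Defs.
Variable R : realType.
Variable d : nat.

Definition eix (t : R) : R[i] := Complex (cos t) (sin t).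

Definition cabs2 (z : R[i]) : R := complex.Re z ^+ 2 + complex.Im z ^+ 2.

Definition dotv (y x : 'cV[R]_d) : R := \sum_(m < d) y m 0 * x m 0.

Definition kdot (K : 'M[R]_d) (j : 'I_d) (x : 'cV[R]_d) : R := dotv (col j K) x.

(* u = [alpha_1..alpha_d, beta_1..beta_d]^T in C^{2d};
   p(x;u) = sum_j alpha_j e^{i k_j.x} + beta_j e^{-i k_j.x} *)
Definition pfun (K : 'M[R]_d) (u : 'cV[R[i]]_(d + d)) (x : 'cV[R]_d) : R[i] :=
  \sum_(j < d) (u (lshift d j) 0 * eix (kdot K j x)
                + u (rshift d j) 0 * eix (- kdot K j x)).

Definition dpart (f : 'cV[R]_d -> R) (x : 'cV[R]_d) (m : 'I_d) : R :=
  derive f x (delta_mx m 0 : 'cV[R]_d).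

Definition gradp_sq (K : 'M[R]_d) (u : 'cV[R[i]]_(d + d)) (x : 'cV[R]_d) : R :=
  \sum_(m < d) (dpart (fun y => complex.Re (pfun K u y)) x m ^+ 2
                + dpart (fun y => complex.Im (pfun K u y)) x m ^+ 2).

Definition psi (a b : R) (K : 'M[R]_d) (u : 'cV[R[i]]_(d + d)) (x : 'cV[R]_d) : R :=
  a * cabs2 (pfun K u x) - b * gradp_sq K u x.

Definition adjmx m n (M : 'M[R[i]]_(m, n)) : 'M[R[i]]_(n, m) :=
  (map_mx (@conjc R) M)^T.

Definition stackv (s : bool) (v : 'cV[R]_d) : 'cV[R[i]]_(d + d) :=
  col_mx (map_mx (fun r => (r%:C)%C) v) (map_mx (fun r => (((-1) ^+ s * r)%:C)%C) v).

Definition cnorm2 (u : 'cV[R[i]]_(d + d)) : R := \sum_(i < d + d) cabs2 (u i 0).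

Definition Amx (K : 'M[R]_d) : 'M[R]_d := (2 * pi) *: (invmx K)^T.

Definition orthc (S : set 'cV[R]_d) : set 'cV[R]_d :=
  [set x | forall y, S y -> dotv y x = 0].

Definition spanf (Z : set 'I_d) (f : 'I_d -> 'cV[R]_d) : set 'cV[R]_d :=
  [set x | exists c : 'I_d -> R,
           x = \sum_(j < d | `[< Z j >]) c j *: f j].

Definition levelset (a b : R) (K : 'M[R]_d) (u : 'cV[R[i]]_(d + d)) (lam : R[i])
  : set 'cV[R]_d := [set x | ((psi a b K u x)%:C)%C = lam].

End Defs.

(* Main.v *)
Require Import Defs.
From HB Require Import structures.
From mathcomp Require Import all_boot all_order all_algebra.
From mathcomp Require Import all_classical all_reals.
From mathcomp Require Import topology normedtype derive trigo.
From mathcomp Require complex.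
Import complex.
From mathcomp Require Import ring.
Import Order.TTheory GRing.Theory Num.Theory.
Local Open Scope ring_scope.
Local Open Scope classical_set_scope.

Section Helpers.
Variable R : realType.
Variable d : nat.

Lemma dotvE (y x : 'cV[R]_d) : dotv y x = (y^T *m x) 0 0.
Proof. by rewrite /dotv !mxE; apply: eq_bigr => m _; rewrite mxE. Qed.

Lemma sum_col_mul (P : pred 'I_d) (c : 'I_d -> R) (M : 'M[R]_d) :
  \sum_(i < d | P i) c i *: col i M = M *m \col_i (if P i then c i else 0).
Proof.
apply/matrixP => r k; rewrite summxE !mxE big_mkcond /=.
apply: eq_bigr => i _; rewrite !mxE; case: (P i); rewrite ?mulr0 //.
by rewrite mulrC.
Qed.

Lemma KtA (K : 'M[R]_d) : K \in unitmx -> K^T *m Amx K = (2 * pi) *: 1%:M.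
Proof.
move=> hK; rewrite /Amx -scalemxAr -trmx_mul mulVmx // trmx1 //.
Qed.

End Helpers.
Section H2.
Variable R : realType.
Variable d : nat.

Lemma dpart_per (f : 'cV[R]_d -> R) (x : 'cV[R]_d) m :
  (forall y, f (y + x) = f y) -> dpart f x m = dpart f 0 m.
Proof.
move=> hp; rewrite /dpart /derive.
f_equal; f_equal; apply: funext => h /=.
rewrite /shift /= hp addr0.
by rewrite -{1}(add0r x) hp.
Qed.

Lemma psi_per a b (K : 'M[R]_d) u (x : 'cV[R]_d) :
  (forall y, pfun K u (y + x) = pfun K u y) -> psi a b K u x = psi a b K u 0.
Proof.
move=> hp; rewrite /psi /gradp_sq.
rewrite -{1}(add0r x) hp; congr (_ - _ * _).
apply: eq_bigr => m _.
rewrite (@dpart_per (fun y => complex.Re (pfun K u y))); last by move=> y; rewrite hp.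
by rewrite (@dpart_per (fun y => complex.Im (pfun K u y))) // => y; rewrite hp.
Qed.

Lemma adj_norm (u : 'cV[R[i]]_(d + d)) : (adjmx u *m u) 0 0 = ((cnorm2 u)%:C)%C.
Proof.
rewrite /cnorm2 rmorph_sum !mxE; apply: eq_bigr => i _.
rewrite !mxE /cabs2; case: (u i 0) => re im /=.
apply/eqP; rewrite eq_complex /=; apply/andP; split; apply/eqP.
  rewrite /=. ring.
rewrite /=. ring.
Qed.

End H2.
Arguments KtA {R d K}.
Arguments sum_col_mul {R d}.
Arguments dotvE {R d}.
Arguments psi_per {R d}.
Arguments adj_norm {R d}.
Arguments dpart_per {R d}.
Lemma dotv_col (R : realType) d (K : 'M[R]_d) j (x : 'cV[R]_d) :
  dotv (col j K) x = (K^T *m x) j 0.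
Proof. by rewrite /dotv mxE; apply: eq_bigr => m _; rewrite !mxE. Qed.

Theorem lemma2p4 (R : realType) (d : nat) (hd : (2 <= d)%N)
  (K : 'M[R]_d) (hK : K \in unitmx) (a b : R)
  (Q : 'M[R[i]]_(d + d))
  (hQherm : adjmx Q = Q)
  (hQ : forall u : 'cV[R[i]]_(d + d),
      (adjmx u *m Q *m u) 0 0 = ((psi a b K u 0)%:C)%C)
  (v : 'cV[R]_d) (s : bool) (lam : R[i])
  (hunit : cnorm2 (stackv s v) = 1)
  (heig : Q *m stackv s v = lam *: stackv s v)
  (hZ : exists j : 'I_d, v j 0 = 0) :
  let Z := [set j : 'I_d | v j 0 = 0] in
  orthc [set col j K | j in ~` Z] = spanf Z (fun j => col j (Amx K))
  /\ spanf Z (fun j => col j (Amx K)) `<=` levelset a b K (stackv s v) lam.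
Proof.
move=> Z.
have hKA := KtA hK.
have pi0 : (2 * pi : R) != 0.
  by rewrite gt_eqF // mulr_gt0 // pi_gt0.
have hkd : forall j w, dotv (col j K) (Amx K *m w) = 2 * pi * w j 0.
  move=> j w; rewrite dotv_col mulmxA hKA -scalemxAl mul1mx !mxE //.
have hAK : Amx K *m K^T = (2 * pi) *: 1%:M.
  by rewrite /Amx -scalemxAl -trmx_mul mulmxV // trmx1.
split.
  apply/seteqP; split => x /=.
    move=> hx; exists (fun j => dotv (col j K) x / (2 * pi)).
    rewrite sum_col_mul.
    have -> : \col_j (if `[< Z j >] then dotv (col j K) x / (2 * pi) else 0)
        = (2 * pi)^-1 *: (K^T *m x).
      apply/matrixP => j k; rewrite [LHS]mxE [RHS]mxE (ord1 k).
      case: asboolP => hj.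
        by rewrite dotv_col mulrC.
      have := hx (col j K) (ex_intro2 _ _ j hj erefl).
      by rewrite dotv_col => ->; rewrite mulr0.
    by rewrite -scalemxAr mulmxA hAK -scalemxAl mul1mx scalerA mulVf // scale1r.
  move=> [c ->] y [j hj <-].
  rewrite sum_col_mul hkd mxE; case: asboolP => // hz.
  by rewrite mulr0.
move=> x [c ->]; rewrite sum_col_mul.
set w := \col_j _.
rewrite /levelset /= psi_per.
  rewrite -hQ -mulmxA heig -scalemxAr mxE adj_norm hunit mulr1 //.
move=> y; rewrite /pfun; apply: eq_bigr => j _.
case: (pselect (v j 0 = 0)) => hv.
  rewrite /stackv col_mxEu col_mxEd !mxE hv mulr0 /=.
  by rewrite !mul0r.
have -> : kdot K j (y + Amx K *m w) = kdot K j y.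
  rewrite /kdot !dotv_col mulmxDr mxE mulmxA hKA -scalemxAl mul1mx [X in _ + X]mxE.
  have -> : w j 0 = 0.
    by rewrite /w mxE; case: asboolP => // hz; exfalso; exact: (hv hz).
  by rewrite mulr0 addr0.
by [].
Qed.
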